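(* For the decorated combinatorial tiling $K$ one has $\omega(K)\cong K$, but for every vertex $v$ of $K$ the pointed tilings $(\omega(K),v)$ and $(K,v)$ are not isomorphic.
   Context: Decorated subdivision: a decorated pentagon has boundary vertices $v_1,\dots,v_5$ in cyclic order (indices mod 5), corner $v_i$ labelled $i$; $\omega$ adds $m_i$ inside edge $v_iv_{i+1}$, interior vertices $c_1,\dots,c_5$, edges $c_ic_{i+1}$, $c_im_i$, and replaces the face by the central pentagon $c_1\cdots c_5$ (label $i+1$ at $c_i$) and petals $v_i\,m_i\,c_i\,c_{i-1}\,m_{i-1}$ labelled $i,i+1,i+2,i+3,i+4$ (mod 5). $K_0$ is one decorated pentagon, $K_n=\omega^n(K_0)$ embeds label-preservingly onto the central superpentagon $\omega^n(\text{central face of }\omega(K_0))$ of $K_{n+1}$, and $K$ is the direct limit (a 2-dimensional CW-complex homeomorphic to the open disk). $\omega(K)$ is obtained by applying $\omega$ to every face of $K$; each vertex $v$ of $K$ is also a vertex of $\omega(K)$. Isomorphisms are cell-preserving, label-preserving bijections; an isomorphism of pointed tilings $(L,u)\to(L',u')$ must send $u$ to $u'$. *)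

(* Defs.v *)
From Stdlib Require Import ClassicalEpsilon.
From mathcomp Require Import all_boot.
Set Implicit Arguments. Unset Strict Implicit. Unset Printing Implicit Defensive.

(* Every face is a pentagon whose corners carry the labels 0..4 (the paper's *)
(* labels 1..5, shifted by one), the corner labelled i+1 following the      *)
(* corner labelled i in the cyclic boundary order.                          *)
(*   side f i   : the edge of f joining corner i to corner i+1 (mod 5)       *)
(*   sdir f i   : bookkeeping bit: true iff                                 *)
(*                ends (side f i) = (corner f i, corner f (i+1)).           *)
Record pcx := PCX {
  vtx : Type; edg : Type; fac : Type;
  ends : edg -> vtx * vtx;
  corner : fac -> 'I_5 -> vtx;
  side : fac -> 'I_5 -> edg;
  sdir : fac -> 'I_5 -> bool }.

Definition succ5 (i : 'I_5) : 'I_5 := @ordS 5 i.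
Definition pred5 (i : 'I_5) : 'I_5 := @ord_pred 5 i.

(* New vertices: old vertices OV v, midpoints OM e (one per edge, shared by *)
(* both faces containing e), and interior vertices OC f i = c_i of face f.  *)
Inductive ovtx (X : pcx) : Type :=
  | OV of vtx X | OM of edg X | OC of fac X & 'I_5.
(* OH e b: the half of e from its endpoint (if b then snd else fst) to m_e;
   OS f i: the edge c_i m_i; OR f i: the edge c_i c_{i+1}. *)
Inductive oedg (X : pcx) : Type :=
  | OH of edg X & bool | OS of fac X & 'I_5 | OR of fac X & 'I_5.
(* OZ f: central pentagon of f; OP f i: petal v_i m_i c_i c_{i-1} m_{i-1}. *)
Inductive ofac (X : pcx) : Type :=
  | OZ of fac X | OP of fac X & 'I_5.

Section Omega.
Variable X : pcx.

Definition om_ends (e : oedg X) : ovtx X * ovtx X :=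
  match e with
  | OH e b => (OV (X:=X) (if b then (ends e).2 else (ends e).1), OM (X:=X) e)
  | OS f i => (OM (X:=X) (side f i), OC f i)
  | OR f i => (OC f i, OC f (succ5 i))
  end.

(* position k (0..4) of label j in the petal starting at label i *)
Definition rel5 (j i : 'I_5) : nat := (j + 5 - i) %% 5.

Definition om_corner (F : ofac X) (j : 'I_5) : ovtx X :=
  match F with
  | OZ f => OC f (pred5 j)
  | OP f i =>
      match rel5 j i with
      | 0 => OV (X:=X) (corner f i)
      | 1 => OM (X:=X) (side f i)
      | 2 => OC f i
      | 3 => OC f (pred5 i)
      | _ => OM (X:=X) (side f (pred5 i))
      end
  end.

Definition om_side (F : ofac X) (j : 'I_5) : oedg X :=
  match F with
  | OZ f => OR f (pred5 j)
  | OP f i =>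
      match rel5 j i with
      | 0 => OH (side f i) (~~ sdir f i)
      | 1 => OS f i
      | 2 => OR f (pred5 i)
      | 3 => OS f (pred5 i)
      | _ => OH (side f (pred5 i)) (sdir f (pred5 i))
      end
  end.

Definition om_sdir (F : ofac X) (j : 'I_5) : bool :=
  match F with
  | OZ f => true
  | OP f i => (rel5 j i <= 1)%N
  end.

Definition om : pcx := @PCX (ovtx X) (oedg X) (ofac X) om_ends om_corner om_side om_sdir.
End Omega.

Record hom (X Y : pcx) := Hom {
  hV : vtx X -> vtx Y; hE : edg X -> edg Y; hF : fac X -> fac Y }.

Definition is_iso (X Y : pcx) (h : hom X Y) : Prop :=
  bijective (hV h) /\ bijective (hE h) /\ bijective (hF h) /\
  (forall f i, corner (hF h f) i = hV h (corner f i)) /\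
  (forall f i, side (hF h f) i = hE h (side f i)) /\
  (forall e, ends (hE h e) = (hV h (ends e).1, hV h (ends e).2) \/
             ends (hE h e) = (hV h (ends e).2, hV h (ends e).1)).

Definition om_map (X Y : pcx) (h : hom X Y) : hom (om X) (om Y) :=
  @Hom (om X) (om Y) (fun v : ovtx X => match v with
                | OV v => OV (hV h v) | OM e => OM (hE h e)
                | OC f i => OC (hF h f) i end)
      (fun e : oedg X => match e with
                | OH e b => OH (hE h e) b | OS f i => OS (hF h f) i
                | OR f i => OR (hF h f) i end)
      (fun F : ofac X => match F with
                | OZ f => OZ (hF h f) | OP f i => OP (hF h f) i end).

Definition K0 : pcx :=
  @PCX 'I_5 'I_5 unit (fun e => (e, succ5 e)) (fun _ i => i) (fun _ i => i)
       (fun _ _ => true).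

Fixpoint Kn (n : nat) : pcx := match n with 0 => K0 | n'.+1 => om (Kn n') end.

(* K_0 onto the central face of omega(K_0), label-preservingly:
   v_i |-> c_{i-1}, edge v_i v_{i+1} |-> c_{i-1} c_i. *)
Definition iota0 : hom K0 (om K0) :=
  @Hom K0 (om K0) (fun i : 'I_5 => OC (tt : fac K0) (pred5 i))
      (fun i : 'I_5 => OR (tt : fac K0) (pred5 i))
      (fun _ => OZ (tt : fac K0)).

Fixpoint iota (n : nat) : hom (Kn n) (Kn n.+1) :=
  match n with 0 => iota0 | n'.+1 => om_map (iota n') end.

Fixpoint upV (n k : nat) (x : vtx (Kn n)) : vtx (Kn (k + n)) :=
  match k with 0 => x | k'.+1 => hV (iota (k' + n)) (upV k' x) end.
Fixpoint upE (n k : nat) (x : edg (Kn n)) : edg (Kn (k + n)) :=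
  match k with 0 => x | k'.+1 => hE (iota (k' + n)) (upE k' x) end.
Fixpoint upF (n k : nat) (x : fac (Kn n)) : fac (Kn (k + n)) :=
  match k with 0 => x | k'.+1 => hF (iota (k' + n)) (upF k' x) end.

(* Direct limit: disjoint union of the K_n modulo identification along iota *)
Definition quot (T : Type) (R : T -> T -> Prop) : Type :=
  {P : T -> Prop | exists x, P = R x}.
Definition cls (T : Type) (R : T -> T -> Prop) (x : T) : quot R :=
  exist _ (R x) (ex_intro _ x erefl).
Definition rep (T : Type) (R : T -> T -> Prop) (q : quot R) : T :=
  proj1_sig (constructive_indefinite_description _ (proj2_sig q)).

Definition SV := {n : nat & vtx (Kn n)}.
Definition SE := {n : nat & edg (Kn n)}.
Definition SF := {n : nat & fac (Kn n)}.

Definition RV (x y : SV) : Prop := exists k l,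
  existT (fun n => vtx (Kn n)) (k + projT1 x) (upV k (projT2 x)) =
  existT (fun n => vtx (Kn n)) (l + projT1 y) (upV l (projT2 y)).
Definition RE (x y : SE) : Prop := exists k l,
  existT (fun n => edg (Kn n)) (k + projT1 x) (upE k (projT2 x)) =
  existT (fun n => edg (Kn n)) (l + projT1 y) (upE l (projT2 y)).
Definition RF (x y : SF) : Prop := exists k l,
  existT (fun n => fac (Kn n)) (k + projT1 x) (upF k (projT2 x)) =
  existT (fun n => fac (Kn n)) (l + projT1 y) (upF l (projT2 y)).

Definition clsV (n : nat) (x : vtx (Kn n)) : quot RV := cls RV (existT _ n x).
Definition clsE (n : nat) (x : edg (Kn n)) : quot RE := cls RE (existT _ n x).

Definition K_ends (e : quot RE) : quot RV * quot RV :=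
  let: existT n x := rep e in
  (clsV (ends x).1, clsV (ends x).2).
Definition K_corner (f : quot RF) (i : 'I_5) : quot RV :=
  let: existT n x := rep f in clsV (corner x i).
Definition K_side (f : quot RF) (i : 'I_5) : quot RE :=
  let: existT n x := rep f in clsE (side x i).
Definition K_sdir (f : quot RF) (i : 'I_5) : bool :=
  let: existT n x := rep f in sdir x i.

Definition K : pcx := @PCX (quot RV) (quot RE) (quot RF) K_ends K_corner K_side K_sdir.

(* Main.v *)
From Stdlib Require Import ClassicalEpsilon FunctionalExtensionality PropExtensionality ProofIrrelevance Eqdep_dec PeanoNat.
From mathcomp Require Import all_boot.
Require Import Defs.
Set Implicit Arguments. Unset Strict Implicit. Unset Printing Implicit Defensive.

Section Gen.
Variable T : nat -> Type.
Variable io : forall n, T n -> T n.+1.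
Fixpoint gup (n k : nat) (x : T n) : T (k + n) :=
  match k with 0 => x | k'.+1 => @io (k' + n) (gup k' x) end.
Definition GS := {n : nat & T n}.
Definition GU (k : nat) (X : GS) : GS := existT T (k + projT1 X) (gup k (projT2 X)).
Definition GR (X Y : GS) : Prop := exists k l, GU k X = GU l Y.
Definition Gstep (X : GS) : GS := existT T (projT1 X).+1 (io (projT2 X)).

Lemma GU0 X : GU 0 X = X. Proof. by case: X. Qed.
Lemma GUS k X : GU k.+1 X = Gstep (GU k X). Proof. by []. Qed.
Lemma GU_comp j k X : GU j (GU k X) = GU (j + k) X.
Proof.
elim: j => [|j IH]; first by rewrite GU0.
by rewrite GUS IH -GUS addSn.
Qed.
Lemma GR_refl X : GR X X. Proof. by exists 0, 0. Qed.
Lemma GR_sym X Y : GR X Y -> GR Y X. Proof. by case=> k [l E]; exists l, k. Qed.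
Lemma GR_trans X Y Z : GR X Y -> GR Y Z -> GR X Z.
Proof.
case=> a [b E1] [c [d E2]]; exists (c + a), (b + d).
rewrite -!GU_comp E1 !GU_comp addnC -GU_comp E2 GU_comp //.
Qed.
Lemma GR_step X : GR X (Gstep X). Proof. by exists 1, 0; rewrite GU0. Qed.
Lemma GR_up k X : GR X (GU k X). Proof. by exists k, 0; rewrite GU0. Qed.

Lemma GR_const (B : Type) (c : GS -> B) : (forall X, c (Gstep X) = c X) ->
  forall X Y, GR X Y -> c X = c Y.
Proof.
move=> H X Y [k [l E]].
have Hc : forall k X, c (GU k X) = c X.
  by move=> k' X'; elim: k' => [|k' IH]; [rewrite GU0|rewrite GUS H].
by rewrite -(Hc k X) E Hc.
Qed.

Hypothesis io_inj : forall n, injective (@io n).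
Lemma GR_inj n (x y : T n) : GR (existT T n x) (existT T n y) -> x = y.
Proof.
case=> k [l E].
have E1 := congr1 (@projT1 _ _) E; simpl in E1.
move/eqP: E1; rewrite eqn_add2r => /eqP E1; subst l.
move: (@inj_pair2_eq_dec nat Nat.eq_dec T _ _ _ E); clear E.
elim: k => [//|k IH] /= H; apply: IH; exact: io_inj H.
Qed.
End Gen.

Section Gen2.
Variables (T1 T2 : nat -> Type) (io1 : forall n, T1 n -> T1 n.+1) (io2 : forall n, T2 n -> T2 n.+1).
Lemma GR_map (h : GS T1 -> GS T2) : (forall X, h (Gstep io1 X) = Gstep io2 (h X)) ->
  forall X Y, GR io1 X Y -> GR io2 (h X) (h Y).
Proof.
move=> H X Y [k [l E]].
have Hc : forall k X, h (GU io1 k X) = GU io2 k (h X).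
  by move=> k' X'; elim: k' => [|k' IH]; [rewrite !GU0|rewrite !GUS H IH].
by exists k, l; rewrite -!Hc E.
Qed.
End Gen2.

Section Quot.
Variables (A : Type) (R : A -> A -> Prop).
Hypotheses (Rr : forall x, R x x) (Rs : forall x y, R x y -> R y x)
  (Rt : forall x y z, R x y -> R y z -> R x z).
Lemma cls_eq x y : cls R x = cls R y <-> R x y.
Proof.
split.
  move=> /(congr1 (@proj1_sig _ _)) /= E; rewrite E; exact: Rr.
move=> H; apply: eq_sig_hprop => [P p q|]; first exact: proof_irrelevance.
simpl; apply: functional_extensionality => z; apply: propositional_extensionality.
split; [apply: Rt; exact: Rs|exact: Rt].
Qed.
Lemma cls_rep q : cls R (rep q) = q.
Proof.
rewrite /rep; case: (constructive_indefinite_description _ _) => x /= E.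
by case: q E => P [y Hy] /= E; apply: eq_sig_hprop => [P' p q|] /=; [exact: proof_irrelevance|rewrite E].
Qed.
Lemma rep_cls x : R x (rep (cls R x)).
Proof. apply/cls_eq; by rewrite cls_rep. Qed.
End Quot.

Definition TV n := vtx (Kn n).
Definition TE n := edg (Kn n).
Definition TF n := fac (Kn n).
Definition ioV n : TV n -> TV n.+1 := hV (iota n).
Definition ioE n : TE n -> TE n.+1 := hE (iota n).
Definition ioF n : TF n -> TF n.+1 := hF (iota n).
Lemma RVE : RV = GR ioV. Proof. reflexivity. Qed.
Lemma REE : RE = GR ioE. Proof. reflexivity. Qed.
Lemma RFE : RF = GR ioF. Proof. reflexivity. Qed.


Ltac ord5 := let H := fresh in case=> [[|[|[|[|[|?]]]]] H] //; apply/val_inj.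

Lemma sp5 i : succ5 (pred5 i) = i. Proof. by move: i; ord5. Qed.
Lemma ps5 i : pred5 (succ5 i) = i. Proof. by move: i; ord5. Qed.
Lemma pred5_inj : injective pred5. Proof. by move=> i j /(congr1 succ5); rewrite !sp5. Qed.
Lemma succ5_inj : injective succ5. Proof. by move=> i j /(congr1 pred5); rewrite !ps5. Qed.
Lemma succ5_neq i : succ5 i <> i. Proof. by move: i; ord5. Qed.
Lemma succ_pred5_neq i : succ5 i <> pred5 i. Proof. by move: i; ord5. Qed.
Lemma rel5_0 i : rel5 i i = 0. Proof. by move: i; ord5. Qed.
Lemma rel5_1 i : rel5 (succ5 i) i = 1. Proof. by move: i; ord5. Qed.
Lemma rel5_4 i : rel5 (pred5 i) i = 4. Proof. by move: i; ord5. Qed.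
Lemma rel5_3 i : rel5 (pred5 (pred5 i)) i = 3. Proof. by move: i; ord5. Qed.
Lemma rel5_2 i : rel5 (succ5 (succ5 i)) i = 2. Proof. by move: i; ord5. Qed.

Definition strict X Y (h : hom X Y) :=
  [/\ (forall e, ends (hE h e) = (hV h (ends e).1, hV h (ends e).2)),
      (forall f i, corner (hF h f) i = hV h (corner f i)),
      (forall f i, side (hF h f) i = hE h (side f i)) &
      (forall f i, sdir (hF h f) i = sdir f i)].

Lemma strict_om X Y (h : hom X Y) : strict h -> strict (om_map h).
Proof.
case=> He Hc Hs Hd; split.
- case=> [e b|f i|f i] /=; rewrite ?He ?Hs //; by case: b.
- case=> [f|f i] j //=; case: (rel5 j i) => [|[|[|[|?]]]] //=; by rewrite ?Hc ?Hs.
- case=> [f|f i] j //=; case: (rel5 j i) => [|[|[|[|?]]]] //=; by rewrite ?Hs ?Hd.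
- by case=> [f|f i] j.
Qed.

Lemma strict_iota0 : strict iota0.
Proof.
split => //=.
- by move=> e; congr (_, OC _ _); rewrite sp5 ps5.
Qed.

Lemma strict_iota n : strict (iota n).
Proof. elim: n => [|n IH]; [exact: strict_iota0|exact: strict_om]. Qed.

Definition hinj X Y (h : hom X Y) :=
  [/\ injective (hV h), injective (hE h) & injective (hF h)].
Lemma hinj_om X Y (h : hom X Y) : hinj h -> hinj (om_map h).
Proof.
case=> Iv Ie If; split.
- by case=> [a|a|a i] [b|b|b j] //= [] => [/Iv|/Ie|/If] -> //= ->.
- by case=> [a x|a x|a x] [b y|b y|b y] //= [] => [/Ie|/If|/If] -> ->.
- by case=> [a|a x] [b|b y] //= [] => [/If|/If] -> //= ->.
Qed.
Lemma hinj_iota n : hinj (iota n).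
Proof.
elim: n => [|n IH]; last exact: hinj_om.
split => /=.
- move=> a b E; apply: pred5_inj.
  exact: (congr1 (fun v : ovtx K0 => match v with OC _ i => i | _ => a end) E).
- move=> a b E; apply: pred5_inj.
  exact: (congr1 (fun v : oedg K0 => match v with OR _ i => i | _ => a end) E).
- by case; case.
Qed.


Section GenCls.
Variables (T : nat -> Type) (io : forall n, T n -> T n.+1).
Lemma Gcls_eq X Y : cls (GR io) X = cls (GR io) Y <-> GR io X Y.
Proof. apply: cls_eq; [exact: GR_refl|exact: GR_sym|exact: GR_trans]. Qed.
Lemma Grep_cls X : GR io X (rep (cls (GR io) X)).
Proof. apply: rep_cls; [exact: GR_refl|exact: GR_sym|exact: GR_trans]. Qed.
Lemma Gcls_rep q : cls (GR io) (rep q) = q.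
Proof. exact: cls_rep. Qed.
Lemma Gcls_step X : cls (GR io) (Gstep io X) = cls (GR io) X.
Proof. apply/Gcls_eq/GR_sym/GR_step. Qed.
Lemma Gconst_cls B (c : GS T -> B) : (forall X, c (Gstep io X) = c X) ->
  forall X, c (rep (cls (GR io) X)) = c X.
Proof. move=> H X; apply/esym/(GR_const H)/Grep_cls. Qed.
End GenCls.

Section GenMap.
Variables (T1 T2 : nat -> Type) (io1 : forall n, T1 n -> T1 n.+1) (io2 : forall n, T2 n -> T2 n.+1).
Lemma Gcls_map (h : GS T1 -> GS T2) : (forall X, h (Gstep io1 X) = Gstep io2 (h X)) ->
  forall X, cls (GR io2) (h (rep (cls (GR io1) X))) = cls (GR io2) (h X).
Proof.
move=> H X; apply/Gcls_eq/GR_sym/GR_map => //; exact: Grep_cls.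
Qed.
End GenMap.

Definition clsF n (x : fac (Kn n)) : quot RF := cls RF (existT _ n x).

Lemma clsV_inj n (x y : vtx (Kn n)) : clsV x = clsV y -> x = y.
Proof. move/(@Gcls_eq _ ioV); apply: GR_inj => m; by case: (hinj_iota m). Qed.
Lemma clsE_inj n (x y : edg (Kn n)) : clsE x = clsE y -> x = y.
Proof. move/(@Gcls_eq _ ioE); apply: GR_inj => m; by case: (hinj_iota m). Qed.
Lemma clsF_inj n (x y : fac (Kn n)) : clsF x = clsF y -> x = y.
Proof. move/(@Gcls_eq _ ioF); apply: GR_inj => m; by case: (hinj_iota m). Qed.

Lemma clsV_step n (x : vtx (Kn n)) : clsV (hV (iota n) x) = clsV x.
Proof. exact: (@Gcls_step _ ioV (existT _ n x)). Qed.
Lemma clsE_step n (x : edg (Kn n)) : clsE (hE (iota n) x) = clsE x.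
Proof. exact: (@Gcls_step _ ioE (existT _ n x)). Qed.
Lemma clsF_step n (x : fac (Kn n)) : clsF (hF (iota n) x) = clsF x.
Proof. exact: (@Gcls_step _ ioF (existT _ n x)). Qed.

Lemma K_corner_cls n (f : fac (Kn n)) i : K_corner (clsF f) i = clsV (corner f i).
Proof.
rewrite /K_corner.
pose h := fun Y : GS TF => existT TV (projT1 Y) (corner (projT2 Y) i).
have := @Gcls_map _ _ ioF ioV h _ (existT _ n f).
have Hc : forall X, h (Gstep ioF X) = Gstep ioV (h X).
  by case=> k y; rewrite /h /Gstep /ioF /ioV; case: (strict_iota k) => _ -> .
case: (rep _) => m g /= E; exact: (E Hc).
Qed.
Lemma K_side_cls n (f : fac (Kn n)) i : K_side (clsF f) i = clsE (side f i).
Proof.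
rewrite /K_side.
pose h := fun Y : GS TF => existT TE (projT1 Y) (side (projT2 Y) i).
have := @Gcls_map _ _ ioF ioE h _ (existT _ n f).
have Hc : forall X, h (Gstep ioF X) = Gstep ioE (h X).
  by case=> k y; rewrite /h /Gstep /ioF /ioE /ioV; case: (strict_iota k) => _ _ -> .
case: (rep _) => m g /= E; exact: (E Hc).
Qed.
Lemma K_sdir_cls n (f : fac (Kn n)) i : K_sdir (clsF f) i = sdir f i.
Proof.
rewrite /K_sdir.
pose h := fun Y : GS TF => sdir (projT2 Y) i.
have := @Gconst_cls _ ioF _ h _ (existT _ n f).
have Hc : forall X, h (Gstep ioF X) = h X.
  by case=> k y; rewrite /h /Gstep /ioF /ioE /ioV; case: (strict_iota k) => _ _ _ -> .
case: (rep _) => m g /= E; exact: (E Hc).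
Qed.
Lemma K_ends_cls n (e : edg (Kn n)) : K_ends (clsE e) = (clsV (ends e).1, clsV (ends e).2).
Proof.
rewrite /K_ends.
pose h1 := fun Y : GS TE => existT TV (projT1 Y) (ends (projT2 Y)).1.
pose h2 := fun Y : GS TE => existT TV (projT1 Y) (ends (projT2 Y)).2.
have := @Gcls_map _ _ ioE ioV h1 _ (existT _ n e).
have := @Gcls_map _ _ ioE ioV h2 _ (existT _ n e).
have Hc1 : forall X, h1 (Gstep ioE X) = Gstep ioV (h1 X).
  by case=> k y; rewrite /h1 /Gstep /ioE /ioV; case: (strict_iota k) => -> .
have Hc2 : forall X, h2 (Gstep ioE X) = Gstep ioV (h2 X).
  by case=> k y; rewrite /h2 /Gstep /ioE /ioV; case: (strict_iota k) => -> .
case: (rep _) => m g /= E2 E1; congr pair; [exact: (E1 Hc1)|exact: (E2 Hc2)].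
Qed.


Lemma elimV (q : vtx K) : exists n (x : vtx (Kn n)), q = clsV x.
Proof. rewrite -(@Gcls_rep _ ioV q); case: (rep q) => n x; by exists n, x. Qed.
Lemma elimE (q : edg K) : exists n (x : edg (Kn n)), q = clsE x.
Proof. rewrite -(@Gcls_rep _ ioE q); case: (rep q) => n x; by exists n, x. Qed.
Lemma elimF (q : fac K) : exists n (x : fac (Kn n)), q = clsF x.
Proof. rewrite -(@Gcls_rep _ ioF q); case: (rep q) => n x; by exists n, x. Qed.

Definition fOV (X : GS TV) : GS TV := existT TV (projT1 X).+1 (OV (projT2 X)).
Definition fOM (X : GS TE) : GS TV := existT TV (projT1 X).+1 (OM (projT2 X)).
Definition fOC i (X : GS TF) : GS TV := existT TV (projT1 X).+1 (OC (projT2 X) i).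
Definition fOH b (X : GS TE) : GS TE := existT TE (projT1 X).+1 (OH (projT2 X) b).
Definition fOS i (X : GS TF) : GS TE := existT TE (projT1 X).+1 (OS (projT2 X) i).
Definition fOR i (X : GS TF) : GS TE := existT TE (projT1 X).+1 (OR (projT2 X) i).
Definition fOZ (X : GS TF) : GS TF := existT TF (projT1 X).+1 (OZ (projT2 X)).
Definition fOP i (X : GS TF) : GS TF := existT TF (projT1 X).+1 (OP (projT2 X) i).

Definition phiV (v : vtx (om K)) : vtx K :=
  match v with
  | OV u => cls RV (fOV (rep u)) | OM e => cls RV (fOM (rep e))
  | OC F i => cls RV (fOC i (rep F)) end.
Definition phiE (v : edg (om K)) : edg K :=
  match v with
  | OH e b => cls RE (fOH b (rep e)) | OS F i => cls RE (fOS i (rep F))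
  | OR F i => cls RE (fOR i (rep F)) end.
Definition phiF (v : fac (om K)) : fac K :=
  match v with
  | OZ F => cls RF (fOZ (rep F)) | OP F i => cls RF (fOP i (rep F)) end.

Lemma phiV_OV n (x : vtx (Kn n)) : phiV (OV (X:=K) (clsV x)) = clsV (OV x : vtx (Kn n.+1)).
Proof. exact: (@Gcls_map _ _ ioV ioV fOV (fun _ => erefl) (existT _ n x)). Qed.
Lemma phiV_OM n (x : edg (Kn n)) : phiV (OM (X:=K) (clsE x)) = clsV (OM x : vtx (Kn n.+1)).
Proof. exact: (@Gcls_map _ _ ioE ioV fOM (fun _ => erefl) (existT _ n x)). Qed.
Lemma phiV_OC n (x : fac (Kn n)) i : phiV (OC (X:=K) (clsF x) i) = clsV (OC x i : vtx (Kn n.+1)).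
Proof. exact: (@Gcls_map _ _ ioF ioV (fOC i) (fun _ => erefl) (existT _ n x)). Qed.
Lemma phiE_OH n (x : edg (Kn n)) b : phiE (OH (X:=K) (clsE x) b) = clsE (OH x b : edg (Kn n.+1)).
Proof. exact: (@Gcls_map _ _ ioE ioE (fOH b) (fun _ => erefl) (existT _ n x)). Qed.
Lemma phiE_OS n (x : fac (Kn n)) i : phiE (OS (X:=K) (clsF x) i) = clsE (OS x i : edg (Kn n.+1)).
Proof. exact: (@Gcls_map _ _ ioF ioE (fOS i) (fun _ => erefl) (existT _ n x)). Qed.
Lemma phiE_OR n (x : fac (Kn n)) i : phiE (OR (X:=K) (clsF x) i) = clsE (OR x i : edg (Kn n.+1)).
Proof. exact: (@Gcls_map _ _ ioF ioE (fOR i) (fun _ => erefl) (existT _ n x)). Qed.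
Lemma phiF_OZ n (x : fac (Kn n)) : phiF (OZ (X:=K) (clsF x)) = clsF (OZ x : fac (Kn n.+1)).
Proof. exact: (@Gcls_map _ _ ioF ioF fOZ (fun _ => erefl) (existT _ n x)). Qed.
Lemma phiF_OP n (x : fac (Kn n)) i : phiF (OP (X:=K) (clsF x) i) = clsF (OP x i : fac (Kn n.+1)).
Proof. exact: (@Gcls_map _ _ ioF ioF (fOP i) (fun _ => erefl) (existT _ n x)). Qed.

Definition gV (X : GS TV) : vtx (om K) :=
  let: existT n x := X in
  match (ioV x : ovtx (Kn n)) with
  | OV y => OV (X:=K) (clsV y) | OM e => OM (X:=K) (clsE e) | OC F i => OC (X:=K) (clsF F) i end.
Definition gE (X : GS TE) : edg (om K) :=
  let: existT n x := X in
  match (ioE x : oedg (Kn n)) with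
  | OH e b => OH (X:=K) (clsE e) b | OS F i => OS (X:=K) (clsF F) i | OR F i => OR (X:=K) (clsF F) i end.
Definition gF (X : GS TF) : fac (om K) :=
  let: existT n x := X in
  match (ioF x : ofac (Kn n)) with
  | OZ F => OZ (X:=K) (clsF F) | OP F i => OP (X:=K) (clsF F) i end.

Lemma gV_step X : gV (Gstep ioV X) = gV X.
Proof.
case: X => n x; rewrite /gV /Gstep /ioV /=.
by case: (hV (iota n) x) => [y|e|F i] /=; rewrite ?clsV_step ?clsE_step ?clsF_step.
Qed.
Lemma gE_step X : gE (Gstep ioE X) = gE X.
Proof.
case: X => n x; rewrite /gE /Gstep /ioE /=.
by case: (hE (iota n) x) => [y b|F i|F i] /=; rewrite ?clsV_step ?clsE_step ?clsF_step.
Qed.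
Lemma gF_step X : gF (Gstep ioF X) = gF X.
Proof.
case: X => n x; rewrite /gF /Gstep /ioF /=.
by case: (hF (iota n) x) => [F|F i] /=; rewrite ?clsF_step.
Qed.

Definition psiV (v : vtx K) : vtx (om K) := gV (rep v).
Definition psiE (v : edg K) : edg (om K) := gE (rep v).
Definition psiF (v : fac K) : fac (om K) := gF (rep v).
Lemma psiV_cls n (x : vtx (Kn n)) : psiV (clsV x) = gV (existT _ n x).
Proof. exact: (Gconst_cls gV_step). Qed.
Lemma psiE_cls n (x : edg (Kn n)) : psiE (clsE x) = gE (existT _ n x).
Proof. exact: (Gconst_cls gE_step). Qed.
Lemma psiF_cls n (x : fac (Kn n)) : psiF (clsF x) = gF (existT _ n x).
Proof. exact: (Gconst_cls gF_step). Qed.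

Lemma psiV_phiV : cancel phiV psiV.
Proof.
case=> [u|u|u i]; [case: (elimV u)|case: (elimE u)|case: (elimF u)] => n [x ->];
 rewrite ?phiV_OV ?phiV_OM ?phiV_OC psiV_cls /gV /ioV /=;
 by rewrite ?clsV_step ?clsE_step ?clsF_step.
Qed.
Lemma phiV_psiV : cancel psiV phiV.
Proof.
move=> v; case: (elimV v) => n [x ->]; rewrite psiV_cls /gV.
rewrite -[RHS]clsV_step /ioV.
by case: (hV (iota n) x) => [y|e|F i]; rewrite ?phiV_OV ?phiV_OM ?phiV_OC.
Qed.
Lemma psiE_phiE : cancel phiE psiE.
Proof.
case=> [u b|u i|u i]; [case: (elimE u)|case: (elimF u)|case: (elimF u)] => n [x ->];
 rewrite ?phiE_OH ?phiE_OS ?phiE_OR psiE_cls /gE /ioE /=;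
 by rewrite ?clsV_step ?clsE_step ?clsF_step.
Qed.
Lemma phiE_psiE : cancel psiE phiE.
Proof.
move=> v; case: (elimE v) => n [x ->]; rewrite psiE_cls /gE.
rewrite -[RHS]clsE_step /ioE.
by case: (hE (iota n) x) => [y b|F i|F i]; rewrite ?phiE_OH ?phiE_OS ?phiE_OR.
Qed.
Lemma psiF_phiF : cancel phiF psiF.
Proof.
case=> [u|u i]; case: (elimF u) => n [x ->];
 rewrite ?phiF_OZ ?phiF_OP psiF_cls /gF /ioF /=;
 by rewrite ?clsF_step.
Qed.
Lemma phiF_psiF : cancel psiF phiF.
Proof.
move=> v; case: (elimF v) => n [x ->]; rewrite psiF_cls /gF.
rewrite -[RHS]clsF_step /ioF.
by case: (hF (iota n) x) => [F|F i]; rewrite ?phiF_OZ ?phiF_OP.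
Qed.

Definition phi : hom (om K) K := Hom phiV phiE phiF.

Lemma Kc n (f : fac (Kn n)) i : @corner K (clsF f) i = clsV (corner f i).
Proof. exact: K_corner_cls. Qed.
Lemma Ks n (f : fac (Kn n)) i : @side K (clsF f) i = clsE (side f i).
Proof. exact: K_side_cls. Qed.
Lemma Kd n (f : fac (Kn n)) i : @sdir K (clsF f) i = sdir f i.
Proof. exact: K_sdir_cls. Qed.
Lemma Ke n (e : edg (Kn n)) : @ends K (clsE e) = (clsV (ends e).1, clsV (ends e).2).
Proof. exact: K_ends_cls. Qed.
Lemma phi_corner F i : K_corner (phiF F) i = phiV (om_corner F i).
Proof.
case: F => [u|u j]; case: (elimF u) => n [x ->].
  by rewrite phiF_OZ K_corner_cls; cbn [om_corner corner om Kn]; rewrite phiV_OC.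
rewrite phiF_OP K_corner_cls; cbn [om_corner corner om Kn].
case: (rel5 i j) => [|[|[|[|?]]]];
by rewrite ?Kc ?Ks ?phiV_OV ?phiV_OM ?phiV_OC.
Qed.
Lemma phi_side F i : K_side (phiF F) i = phiE (om_side F i).
Proof.
case: F => [u|u j]; case: (elimF u) => n [x ->].
  by rewrite phiF_OZ K_side_cls; cbn [om_side side om Kn]; rewrite phiE_OR.
rewrite phiF_OP K_side_cls; cbn [om_side side om Kn].
case: (rel5 i j) => [|[|[|[|?]]]];
by rewrite ?Kd ?Ks ?phiE_OH ?phiE_OS ?phiE_OR.
Qed.
Lemma phi_ends e : K_ends (phiE e) = (phiV (om_ends e).1, phiV (om_ends e).2).
Proof.
case: e => [u b|u i|u i]; [case: (elimE u)|case: (elimF u)|case: (elimF u)] => n [x ->].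
- rewrite phiE_OH K_ends_cls; cbn [om_ends ends om Kn fst snd]; rewrite Ke.
  case: b; by rewrite ?phiV_OV ?phiV_OM.
- rewrite phiE_OS K_ends_cls; cbn [om_ends ends om Kn fst snd].
  by rewrite Ks phiV_OM phiV_OC.
- rewrite phiE_OR K_ends_cls; cbn [om_ends ends om Kn fst snd].
  by rewrite !phiV_OC.
Qed.

Lemma phi_iso : is_iso phi.
Proof.
split; [by exists psiV; [exact: psiV_phiV|exact: phiV_psiV]|].
split; [by exists psiE; [exact: psiE_phiE|exact: phiE_psiE]|].
split; [by exists psiF; [exact: psiF_phiF|exact: phiF_psiF]|].
split; first exact: phi_corner.
split; first exact: phi_side.
move=> e; left; exact: phi_ends.
Qed.


Definition adj (X : pcx) (x y : vtx X) := exists e : edg X, ends e = (x, y) \/ ends e = (y, x).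
Definition deg3 (X : pcx) (y : vtx X) := exists a b c,
  [/\ a <> b, a <> c, b <> c, adj y a /\ adj y b /\ adj y c &
      forall z, adj y z -> [\/ z = a, z = b | z = c]].
Definition Pp (X : pcx) (x : vtx X) := forall y, adj x y -> ~ deg3 y.
Definition CN (X : pcx) (x y : vtx X) := exists z, adj x z /\ adj z y.
Definition GI (X Y : pcx) (f : vtx X -> vtx Y) :=
  bijective f /\ forall x y, adj x y <-> adj (f x) (f y).

Section GIsec.
Variables (X Y : pcx) (f : vtx X -> vtx Y).
Hypothesis Hf : GI f.
Lemma GI_inj : injective f. Proof. by case: Hf => /bij_inj. Qed.
Lemma GI_surj y : exists x, y = f x.
Proof. case: Hf => [[g _ gf] _]; by exists (g y); rewrite gf. Qed.
Lemma GI_deg3 y : deg3 y -> deg3 (f y).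
Proof.
case: Hf => _ Ha [a [b [c [ab ac bc [ya [yb yc]] H]]]].
exists (f a), (f b), (f c); split; try by move/GI_inj.
  by split; [apply/Ha|split; apply/Ha].
move=> z; case: (GI_surj z) => x -> /Ha /H; case=> ->; by [constructor 1|constructor 2|constructor 3].
Qed.
Lemma GI_CN x y : CN x y -> CN (f x) (f y).
Proof. case: Hf => _ Ha [z [H1 H2]]; exists (f z); split; exact/Ha. Qed.
End GIsec.

Lemma GI_inv (X Y : pcx) (f : vtx X -> vtx Y) : GI f ->
  exists g, [/\ GI g, cancel f g & cancel g f].
Proof.
case=> [[g fg gf] Ha]; exists g; split => //; split; first by exists f.
by move=> x y; rewrite Ha !gf.
Qed.

Lemma GI_comp (X Y Z : pcx) (f : vtx X -> vtx Y) (g : vtx Y -> vtx Z) :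
  GI f -> GI g -> GI (g \o f).
Proof.
case=> bf Hf [bg Hg]; split; first exact: bij_comp.
by move=> x y; rewrite Hf Hg.
Qed.

Lemma GI_deg3E (X Y : pcx) (f : vtx X -> vtx Y) y : GI f -> deg3 y <-> deg3 (f y).
Proof.
move=> Hf; split; first exact: GI_deg3.
case: (GI_inv Hf) => g [Hg fg _] /(GI_deg3 Hg); by rewrite fg.
Qed.
Lemma GI_CNE (X Y : pcx) (f : vtx X -> vtx Y) x y : GI f -> CN x y <-> CN (f x) (f y).
Proof.
move=> Hf; split; first exact: GI_CN.
case: (GI_inv Hf) => g [Hg fg _] /(GI_CN Hg); by rewrite !fg.
Qed.
Lemma GI_PpE (X Y : pcx) (f : vtx X -> vtx Y) x : GI f -> Pp x <-> Pp (f x).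
Proof.
move=> Hf; have Hf' := Hf; case: Hf' => _ Ha; split.
  move=> Px y; case: (GI_surj Hf y) => z -> /Ha /Px; by rewrite (GI_deg3E _ Hf).
move=> Px y /Ha /Px; by rewrite -(GI_deg3E _ Hf).
Qed.

Lemma iso_GI (X Y : pcx) (h : hom X Y) : is_iso h -> GI (hV h).
Proof.
case=> bV [bE [_ [_ [_ He]]]]; split => // x y; split.
  case=> e [] Ee; exists (hE h e); case: (He e); rewrite Ee /= => ->; by [left|right|right|left].
case=> e' Ee; case: bE => g _ gE; set e := g e'.
have He' : e' = hE h e by rewrite /e gE.
have Iv := bij_inj bV.
exists e; case: (ends e) (He e) Ee => a b; rewrite -He' /=.
case=> -> [] [/Iv -> /Iv ->]; by [left|right|right|left].
Qed.

Lemma four_in_three (T : Type) (a b c p q r s : T) :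
  p <> q -> p <> r -> p <> s -> q <> r -> q <> s -> r <> s ->
  [\/ p = a, p = b | p = c] -> [\/ q = a, q = b | q = c] ->
  [\/ r = a, r = b | r = c] -> [\/ s = a, s = b | s = c] -> False.
Proof.
move=> pq pr ps qr qs rs Hp Hq Hr Hs.
case: Hp => ?; subst p; case: Hq => ?; subst q; case: Hr => ?; subst r;
case: Hs => ?; subst s; congruence.
Qed.

Section OmFacts.
Variable X : pcx.

Lemma om_adjE (x y : vtx (om X)) : adj x y <-> exists e : oedg X, om_ends e = (x, y) \/ om_ends e = (y, x).
Proof. by []. Qed.

Lemma nbr_OV v y : adj (X:=om X) (OV v) y ->
  exists e b, y = OM e /\ v = (if b then (ends e).2 else (ends e).1).
Proof.
case=> [[e b|f i|f i]] /= [] [] // <- <-; by exists e, b.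
Qed.

Lemma nbr_OC f i y : adj (X:=om X) (OC f i) y ->
  [\/ y = OC f (succ5 i), y = OC f (pred5 i) | y = OM (side f i)].
Proof.
case=> [[e b|g j|g j]] /= [] [] // .
- by move=> <- -> ->; constructor 3.
- by move=> -> -> <-; constructor 1.
- by move=> <- -> <-; constructor 2; rewrite ps5.
Qed.

Lemma deg3_OC f i : deg3 (X:=om X) (OC f i).
Proof.
exists (OC f (succ5 i)), (OC f (pred5 i)), (OM (side f i)); split => //.
- move=> E; apply: (@succ_pred5_neq i).
  exact: (congr1 (fun v : ovtx X => match v with OC _ k => k | _ => i end) E).
- split; [|split].
  + by exists (OR f i); left.
  + by exists (OR f (pred5 i)); right; rewrite /= sp5.
  + by exists (OS f i); right.
- exact: nbr_OC.
Qed.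

Hypothesis H1 : forall e : edg X, (ends e).1 <> (ends e).2.
Hypothesis H2 : forall e : edg X, exists f i g j,
  [/\ side f i = e, side g j = e & (f <> g \/ i <> j)].

Lemma ndeg3_OM e : ~ deg3 (X:=om X) (OM e).
Proof.
case: (H2 e) => f [i [g [j [Ef Eg Hfg]]]].
case=> a [b [c [ab ac bc _ H]]].
apply: (@four_in_three _ a b c (OV (ends e).1) (OV (ends e).2) (OC f i) (OC g j)) => //.
- by case=> /H1.
- by case; case: Hfg.
- apply: H; by exists (OH e false); right.
- apply: H; by exists (OH e true); right.
- apply: H; exists (OS f i); by left; rewrite /= Ef.
- apply: H; exists (OS g j); by left; rewrite /= Eg.
Qed.

Lemma Pp_OV v : Pp (X:=om X) (OV v).
Proof. move=> y /nbr_OV [e [b [-> _]]]; exact: ndeg3_OM. Qed.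

Lemma Pp_char x : Pp (X:=om X) x -> exists v, x = OV v.
Proof.
case: x => [v|e|f i] P; first by exists v.
- case: (H2 e) => f [i [_ [_ [Ef _ _]]]].
  case: (P (OC f i)); last exact: deg3_OC.
  by exists (OS f i); left; rewrite /= Ef.
- case: (P (OC f (succ5 i))); last exact: deg3_OC.
  by exists (OR f i); left.
Qed.

Lemma adj_CN u u' : adj u u' <-> u <> u' /\ CN (X:=om X) (OV u) (OV u').
Proof.
split.
  case=> e He; split.
    by move=> E; subst u'; case: He => He; move: (@H1 e); rewrite He.
  exists (OM e); case: He => He; split.
  - by exists (OH e false); left; rewrite /= He.
  - by exists (OH e true); right; rewrite /= He.
  - by exists (OH e true); left; rewrite /= He.
  - by exists (OH e false); right; rewrite /= He.
case=> neq [z [/nbr_OV [e [b [-> Hu]]]]].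
case=> [[e' b'|g j|g j]] /= [] [] //.
move=> Hu' E'; subst e'; exists e; rewrite Hu -Hu' {Hu Hu'} in neq *.
case: (ends e) neq => p q; case: b; case: b' => /= neq; by [left|right|case: neq].
Qed.
End OmFacts.


Lemma ends_neq n (x : edg (Kn n)) : (ends x).1 <> (ends x).2.
Proof.
case: n x => [|n] x /=.
  move=> E; apply: (@succ5_neq x); by rewrite -E.
case: x => [e b|f i|f i] //=.
move=> E; apply: (@succ5_neq i).
exact: (congr1 (fun v : ovtx (Kn n) => match v with OC _ k => k | _ => i end) (esym E)).
Qed.

Lemma rel5_4s i : rel5 i (succ5 i) = 4. Proof. by move: i; ord5. Qed.

Lemma sides_OR (X : pcx) (f : fac X) i :
  exists (F G : ofac X) j k, [/\ om_side F j = OR f i, om_side G k = OR f i & F <> G].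
Proof.
exists (OZ f), (OP f (succ5 i)), (succ5 i), (succ5 (succ5 (succ5 i))); split => //=.
  by rewrite ps5.
by rewrite rel5_2 ps5.
Qed.
Lemma sides_OS (X : pcx) (f : fac X) i :
  exists (F G : ofac X) j k, [/\ om_side F j = OS f i, om_side G k = OS f i & F <> G].
Proof.
exists (OP f i), (OP f (succ5 i)), (succ5 i), (pred5 (pred5 (succ5 i))); split => /=.
- by rewrite rel5_1.
- by rewrite rel5_3 ps5.
- move=> E; apply: (@succ5_neq i).
  exact: (congr1 (fun v : ofac X => match v with OP _ k => k | _ => i end) (esym E)).
Qed.
Lemma sides_OH (X : pcx) (f : fac X) i b :
  exists F : ofac X, om_side F i = OH (side f i) b /\ (F = OP f i \/ F = OP f (succ5 i)).
Proof.
case Eb: (b == ~~ sdir f i).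
  exists (OP f i); split; last by left.
  by rewrite /= rel5_0 (eqP Eb).
exists (OP f (succ5 i)); split; last by right.
rewrite /= rel5_4s ps5; congr OH.
by case: b (sdir f i) Eb => [] [].
Qed.

Lemma two_sides n (x : edg (Kn n)) : exists (F G : fac (Kn n.+1)) i j,
  [/\ side F i = hE (iota n) x, side G j = hE (iota n) x & (F <> G \/ i <> j)].
Proof.
elim: n x => [|n IH] x.
  case: (sides_OR (tt : fac K0) (pred5 x)) => F [G [j [k [E1 E2 E3]]]].
  by exists F, G, j, k; split; [exact: E1|exact: E2|left].
case: x => [e b|f i|f i].
- case: (IH e) => F [G [i [j [E1 E2 E3]]]].
  case: (sides_OH F i b) => F' [HF' HF]; case: (sides_OH G j b) => G' [HG' HG].
  exists F', G', i, j; split.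
  + by rewrite /= HF' E1.
  + by rewrite /= HG' E2.
  + case: E3 => E3; last by right.
    left; move=> E; apply: E3.
    case: HF => HF; case: HG => HG; rewrite HF HG in E;
    exact: (congr1 (fun v : ofac (Kn n.+1) => match v with OP g _ => g | OZ g => g end) E).
- case: (sides_OS (hF (iota n) f) i) => F [G [j [k [E1 E2 E3]]]].
  by exists F, G, j, k; split; [exact: E1|exact: E2|left].
- case: (sides_OR (hF (iota n) f) i) => F [G [j [k [E1 E2 E3]]]].
  by exists F, G, j, k; split; [exact: E1|exact: E2|left].
Qed.

Lemma KH1 (e : edg K) : (ends e).1 <> (ends e).2.
Proof.
case: (elimE e) => n [x ->]; rewrite Ke /= => /clsV_inj; exact: ends_neq.
Qed.

Lemma KH2 (e : edg K) : exists f i g j,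
  [/\ side f i = e, side g j = e & (f <> g \/ i <> j)].
Proof.
case: (elimE e) => n [x ->]; case: (two_sides x) => F [G [i [j [E1 E2 E3]]]].
exists (clsF F), i, (clsF G), j; split.
- by rewrite Ks E1 clsE_step.
- by rewrite Ks E2 clsE_step.
- case: E3 => E3; [left => /clsF_inj|by right].
  exact: E3.
Qed.


Fixpoint lead (n : nat) : vtx (Kn n) -> nat :=
  match n return vtx (Kn n) -> nat with
  | 0 => fun _ => 0
  | n'.+1 => fun x : ovtx (Kn n') => match x with OV y => (lead y).+1 | _ => 0 end
  end.

Lemma lead_step n (x : vtx (Kn n)) : lead (hV (iota n) x) = lead x.
Proof. elim: n x => [|n IH] //; case=> [y|e|f i] //; exact: (congr1 succn (IH y)). Qed.

Definition kK (v : vtx K) : nat := lead (projT2 (rep v)).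
Lemma kK_cls n (x : vtx (Kn n)) : kK (clsV x) = lead x.
Proof.
exact: (@Gconst_cls _ ioV _ (fun X : GS TV => lead (projT2 X)) (fun X => lead_step (projT2 X)) (existT _ n x)).
Qed.
Lemma kK_phi u : kK (phiV (OV u)) = (kK u).+1.
Proof. case: (elimV u) => n [x ->]; by rewrite phiV_OV !kK_cls. Qed.

Lemma phiGI : GI phiV. Proof. exact: (iso_GI phi_iso). Qed.
Lemma psiGI : GI psiV.
Proof.
case: phiGI => _ Ha; split; first by exists phiV; [exact: phiV_psiV|exact: psiV_phiV].
by move=> x y; rewrite Ha !phiV_psiV.
Qed.

Lemma PomE x : Pp (X:=om K) x <-> exists u, x = OV u.
Proof.
split; first exact: (Pp_char KH2).
case=> u ->; exact: (Pp_OV KH1 KH2).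
Qed.

Lemma descent m : forall (v : vtx K) (f : vtx (om K) -> vtx K),
  kK v = m -> GI f -> f (OV v) = v -> False.
Proof.
elim: m => [|m IH] v f Hk Hf Hv.
all: have Pv : Pp v by rewrite -Hv -(GI_PpE _ Hf); apply/PomE; eauto.
all: have [v' Ev'] : exists v', psiV v = OV v'
  by apply/PomE; rewrite (GI_PpE _ phiGI) phiV_psiV.
all: have Evv : v = phiV (OV v') by rewrite -Ev' phiV_psiV.
all: have Hkv : kK v = (kK v').+1 by rewrite Evv kK_phi.
  by rewrite Hkv in Hk.
pose g u := match psiV (f (OV u)) with OV w => w | _ => u end.
have hg : forall u, psiV (f (OV u)) = OV (g u).
  move=> u; have : Pp (X:=om K) (psiV (f (OV u))).
    rewrite -(GI_PpE _ psiGI) -(GI_PpE _ Hf); apply/PomE; eauto.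
  case/PomE => w Ew; by rewrite /g Ew.
have gv : g v = v'.
  have := hg v; rewrite Hv Ev'; by case.
case: (Hf) => [[finv ffi fif] Hfa].
pose ginv w := match finv (phiV (OV w)) with OV u => u | _ => w end.
have hginv : forall w, finv (phiV (OV w)) = OV (ginv w).
  move=> w; have : Pp (X:=om K) (finv (phiV (OV w))).
    rewrite (GI_PpE _ Hf) fif -(GI_PpE _ phiGI); apply/PomE; eauto.
  case/PomE => u Eu; by rewrite /ginv Eu.
have ginj : injective g.
  move=> u u' E; have : f (OV u) = f (OV u').
    by rewrite -(phiV_psiV (f (OV u))) -(phiV_psiV (f (OV u'))) !hg E.
  by move/(bij_inj (Bijective ffi fif)) => [].
have GIg : GI g.
  split.
    exists ginv.
      move=> u; have : finv (phiV (OV (g u))) = OV u by rewrite -hg phiV_psiV ffi.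
      by rewrite hginv => -[].
    move=> w; apply/esym; have : OV (X:=K) w = psiV (f (OV (ginv w))).
      by rewrite -hginv fif psiV_phiV.
    by rewrite hg => -[].
  move=> u u'; rewrite !(adj_CN KH1) (GI_CNE _ _ Hf) (GI_CNE _ _ psiGI) !hg.
  split; case=> H1 H2; split => //.
    by move/ginj.
  by move=> E; apply: H1; rewrite E.
apply: (IH v' (g \o phiV)).
- by rewrite Hkv in Hk; case: Hk.
- exact: GI_comp phiGI GIg.
- by change (g (phiV (OV v')) = v'); rewrite -Evv gv.
Qed.

Theorem mainTheorem8 :
  (exists h : hom (om K) K, is_iso h) /\
  (forall v : vtx K,
     ~ exists h : hom (om K) K, is_iso h /\ hV h (OV (X:=K) v) = v).
Proof.
split; first by exists phi; exact: phi_iso.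
move=> v [h [Hh Hv]].
exact: (descent (erefl (kK v)) (iso_GI Hh) Hv).
Qed.
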